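(* Let $M_G$ be an $n$-vertex mixed graph with underlying graph $G$, and let $\Delta(G)$ be the maximum degree of $G$. Then $\rho(M_G)\le \Delta(G)$. Moreover, when $G$ is connected, equality $\rho(M_G)=\Delta(G)$ holds if and only if $G$ is $\Delta(G)$-regular and $V(M_G)$ can be partitioned into six (possibly empty) parts $V_1,V_{-1},V_{\omega},V_{\bar\omega},V_{-\omega},V_{-\bar\omega}$ (indexed by $\mathbb{T}_6=\{1,-1,\omega,\bar\omega,-\omega,-\bar\omega\}$) such that one of the following holds: (i) for every $j\in\mathbb{T}_6$ the induced mixed subgraph $M_G[V_j]$ contains only undirected edges, and every edge of $M_G$ not lying inside some $M_G[V_j]$ is an arc $\overrightarrow{uv}$ with $u\in V_j$ and $v\in V_{\bar\omega\cdot j}$ for some $j\in\mathbb{T}_6$; (ii) for every $j\in\mathbb{T}_6$ the set $V_j$ is independent in $G$; every undirected edge $\{u,v\}$ of $M_G$ satisfies $u\in V_j$, $v\in V_{-j}$ for some $j\in\mathbb{T}_6$; and every arc $\overrightarrow{uv}$ of $M_G$ satisfies $u\in V_j$, $v\in V_{-\bar\omega\cdot j}$ for some $j\in\mathbb{T}_6$.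
   Context: A mixed graph $M_G$ is obtained from a finite simple graph $G$ (its underlying graph) by orienting the edges of some subset of $E(G)$; oriented edges are arcs $\overrightarrow{uv}$, the others are undirected edges $\{u,v\}$. Let $\omega=\frac{1+\mathbf{i}\sqrt3}{2}$. The Hermitian adjacency matrix of the second kind $N(M_G)$ is indexed by the vertices, with $(u,v)$-entry $\omega$ if $\overrightarrow{uv}$ is an arc, $\bar\omega$ if $\overrightarrow{vu}$ is an arc, $1$ if $\{u,v\}$ is an undirected edge, and $0$ otherwise. Its eigenvalues are the eigenvalues of $M_G$; with $\lambda_1\ge\dots\ge\lambda_n$ these eigenvalues, the spectral radius is $\rho(M_G)=\max\{|\lambda_1|,|\lambda_n|\}$. $\mathbb{T}_6$ denotes the group of sixth roots of unity. *)

(* Defs.v *)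
From mathcomp Require Import all_boot all_order all_algebra all_field.
Set Implicit Arguments. Unset Strict Implicit. Unset Printing Implicit Defensive.
Import Order.TTheory GRing.Theory Num.Theory.
Local Open Scope ring_scope.

(* A mixed graph on vertex set 'I_n:
   [e] is the adjacency of the underlying simple graph G (symmetric, irreflexive),
   [arc u v] means the edge {u,v} is oriented as the arc u -> v. *)
Definition simple_graph n (e : rel 'I_n) : Prop :=
  (forall u v, e u v = e v u) /\ (forall u, ~~ e u u).

Definition mixed_graph n (e arc : rel 'I_n) : Prop :=
  simple_graph e /\ (forall u v, arc u v -> e u v) /\
  (forall u v, arc u v -> ~~ arc v u).

Definition undirected_edge n (e arc : rel 'I_n) (u v : 'I_n) : bool :=
  [&& e u v, ~~ arc u v & ~~ arc v u].

Definition omega : algC := (1 + 'i * sqrtC 3) / 2.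

Definition T6 : seq algC := [:: 1; -1; omega; omega^*; - omega; - omega^*].

Definition Nmx n (e arc : rel 'I_n) : 'M[algC]_n :=
  \matrix_(u, v) (if arc u v then omega
                  else if arc v u then omega^*
                  else if e u v then 1 else 0).

Definition eigenvalues n (A : 'M[algC]_n) : seq algC :=
  sval (closed_field_poly_normal (char_poly A)).

Definition spectral_radius n (A : 'M[algC]_n) : algC :=
  \big[Num.max/0]_(z <- eigenvalues A) `|z|.

Definition deg n (e : rel 'I_n) (v : 'I_n) : nat := #|[set u | e v u]|.

Definition max_degree n (e : rel 'I_n) : nat := \max_(v < n) deg e v.

Definition regular n (e : rel 'I_n) (k : nat) : Prop := forall v, deg e v = k.

Definition connected n (e : rel 'I_n) : Prop := forall u v, connect e u v.

(* A partition of the vertices into the six parts V_j (j in T_6) is given by a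
   labelling p with p v \in T6; V_j = [set v | p v == j]. *)
Definition T6_labelling n (p : 'I_n -> algC) : Prop := forall v, p v \in T6.

Definition cond_i n (e arc : rel 'I_n) (p : 'I_n -> algC) : Prop :=
  (forall u v, p u = p v -> ~~ arc u v) /\
  (forall u v, e u v -> p u <> p v ->
     (arc u v /\ p v = omega^* * p u) \/ (arc v u /\ p u = omega^* * p v)).

Definition cond_ii n (e arc : rel 'I_n) (p : 'I_n -> algC) : Prop :=
  (forall u v, p u = p v -> ~~ e u v) /\
  (forall u v, undirected_edge e arc u v -> p v = - p u) /\
  (forall u v, arc u v -> p v = - omega^* * p u).

(* Main.v *)
Require Import Defs.
From mathcomp Require Import all_boot all_order all_algebra all_field.
From mathcomp Require Import ring.
Import Order.TTheory GRing.Theory Num.Theory.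
Local Open Scope ring_scope.

Lemma omc : omega^* = 1 - omega.
Proof.
have s3: (sqrtC (3:algC))^* = sqrtC 3.
  by apply: conj_Creal; apply: ger0_real; rewrite sqrtC_ge0.
rewrite /omega fmorph_div rmorphD rmorphM /= conjCi s3 rmorph1 rmorph_nat.
by field.
Qed.

Lemma om2 : omega ^+ 2 = omega - 1.
Proof.
have h : ('i * sqrtC (3:algC)) ^+ 2 = -3 by rewrite exprMn sqrCi sqrtCK mulN1r.
apply/eqP; rewrite -subr_eq0; apply/eqP.
have -> : omega ^+ 2 - (omega - 1) = (('i * sqrtC 3) ^+ 2 + 3) / 4.
  by rewrite /omega; field.
by rewrite h addNr mul0r.
Qed.

Lemma omomc : omega * omega^* = 1.
Proof. by rewrite omc mulrBr mulr1 -expr2 om2 opprB addrC subrK. Qed.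

Lemma omcom : omega^* * omega = 1.
Proof. by rewrite mulrC omomc. Qed.

Lemma three_neq0 : (3 : algC) != 0.
Proof. by rewrite pnatr_eq0. Qed.

Lemma om_neq1 : omega != 1.
Proof.
apply/eqP => h; have := om2; rewrite h expr1n subrr => /eqP; by rewrite oner_eq0.
Qed.

Lemma om_neqN1 : omega != -1.
Proof.
apply/eqP => h; have := om2; rewrite h sqrrN expr1n => /eqP.
rewrite -subr_eq0 opprB addrA -addrA addrC => /eqP h2.
have : (3:algC) = 0 by rewrite -h2; ring.
by move/eqP; rewrite (negbTE three_neq0).
Qed.

Lemma omc_neq1 : omega^* != 1.
Proof.
apply/eqP; rewrite omc => h; have e1 : omega = 1 - (1 - omega) by ring.
have h0 : omega = 0 by rewrite e1 h subrr.
by have := om2; rewrite h0 expr0n /= sub0r => /eqP; rewrite eq_sym oppr_eq0 oner_eq0.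
Qed.

Lemma omc_neqN1 : omega^* != -1.
Proof.
apply/eqP; rewrite omc => h.
have e1 : omega = 1 - (1 - omega) by ring.
have h0 : omega = 2 by rewrite e1 h; ring.
have := om2; rewrite h0 => /eqP; rewrite -subr_eq0 => /eqP h2.
have : (3:algC) = 0 by rewrite -h2; ring.
by move/eqP; rewrite (negbTE three_neq0).
Qed.

Lemma norm_om : `|omega| = 1.
Proof.
apply/eqP; rewrite -(@pexpr_eq1 _ _ 2) // ?normr_ge0 //.
by rewrite normCK omomc.
Qed.

Lemma norm_omc : `|omega^*| = 1.
Proof. by rewrite norm_conjC norm_om. Qed.

Lemma T6P z : z \in T6 -> z = 1 \/ z = -1 \/ z = omega \/ z = omega^* \/ z = - omega \/ z = - omega^*.
Proof.
rewrite !inE => /orP[/eqP->|/orP[/eqP->|/orP[/eqP->|/orP[/eqP->|/orP[/eqP->|/eqP->]]]]].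
all: tauto.
Qed.

Lemma T6N z : z \in T6 -> - z \in T6.
Proof. by case/T6P => [->|[->|[->|[->|[->|->]]]]]; rewrite !inE ?opprK eqxx ?orbT. Qed.

Lemma om_sq' : omega * omega = - omega^*.
Proof. by rewrite -expr2 om2 omc opprB. Qed.

Lemma T6om z : z \in T6 -> omega * z \in T6.
Proof.
case/T6P => [->|[->|[->|[->|[->|->]]]]].
- by rewrite mulr1 !inE eqxx ?orbT.
- by rewrite mulrN1 !inE eqxx ?orbT.
- by rewrite om_sq' !inE eqxx ?orbT.
- by rewrite omomc !inE eqxx ?orbT.
- by rewrite mulrN om_sq' opprK !inE eqxx ?orbT.
- by rewrite mulrN omomc !inE eqxx ?orbT.
Qed.

Lemma T6omc z : z \in T6 -> omega^* * z \in T6.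
Proof.
move=> h; have -> : omega^* * z = - (omega * (omega * z)).
  by rewrite mulrA om_sq' mulNr opprK.
by apply: T6N; do 2 apply: T6om.
Qed.

Lemma T6_neq0 {z} : z \in T6 -> z != 0.
Proof.
have om0 : omega != 0 by apply/eqP => h; have := omomc; rewrite h mul0r => /eqP; rewrite eq_sym oner_eq0.
have omc0 : omega^* != 0 by rewrite conjC_eq0.
case/T6P => [->|[->|[->|[->|[->|->]]]]]; rewrite ?oppr_eq0 ?oner_eq0 //.
Qed.

Lemma NmxE n (e arc : rel 'I_n) w u : Nmx e arc w u =
  if arc w u then omega else if arc u w then omega^* else if e w u then 1 else 0.
Proof. by rewrite mxE. Qed.

Lemma NE0 {n} {e arc : rel 'I_n} {w u} : mixed_graph e arc -> ~~ e w u -> Nmx e arc w u = 0.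
Proof.
move=> [[esym _] [ae _]] hn; rewrite NmxE.
have -> : arc w u = false by apply/negP => /ae; apply/negP.
have -> : arc u w = false by apply/negP => /ae; rewrite esym; apply/negP.
by rewrite (negbTE hn).
Qed.

Lemma Ncases {n} {e arc : rel 'I_n} {w u} : mixed_graph e arc -> e w u ->
  (Nmx e arc w u = omega /\ arc w u) \/
  (Nmx e arc w u = omega^* /\ arc u w /\ ~~ arc w u) \/
  (Nmx e arc w u = 1 /\ ~~ arc w u /\ ~~ arc u w).
Proof.
move=> [[esym _] [ae asy]] he; rewrite NmxE.
case: ifP => hwu; first by left.
case: ifP => huw; first by right; left; rewrite ?hwu.
by rewrite he; right; right; rewrite ?hwu ?huw.
Qed.

Lemma Nconj {n} {e arc : rel 'I_n} {w u} : mixed_graph e arc ->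
  (Nmx e arc u w)^* = Nmx e arc w u.
Proof.
move=> [[esym _] [ae asy]]; rewrite !NmxE.
case: ifP => huw.
  by rewrite (negbTE (asy _ _ huw)) ?huw.
case: ifP => hwu; first by rewrite conjCK.
by rewrite esym; case: (e w u); rewrite ?rmorph1 ?rmorph0.
Qed.

Lemma Nnorm {n} {e arc : rel 'I_n} {w u} : mixed_graph e arc ->
  `|Nmx e arc w u| = (e w u)%:R.
Proof.
move=> H; case: (boolP (e w u)) => he.
  by case: (Ncases H he) => [[-> _]|[[-> _]|[-> _]]]; rewrite ?norm_om ?norm_omc ?normr1.
by rewrite NE0 // normr0.
Qed.

Lemma NNc {n} {e arc : rel 'I_n} {w u} : mixed_graph e arc -> e w u ->
  (Nmx e arc w u)^* * Nmx e arc w u = 1.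
Proof.
move=> H he; rewrite mulrC -normCK Nnorm // he; exact: expr1n.
Qed.

Lemma Nneq0 {n} {e arc : rel 'I_n} {w u} : mixed_graph e arc -> e w u -> Nmx e arc w u != 0.
Proof.
by move=> H he; rewrite -normr_eq0 Nnorm // he oner_eq0.
Qed.

Lemma one_neqN1 : (1 : algC) != -1.
Proof.
apply/eqP => h; have e2 : (2 : algC) = 1 - (-1) by ring.
by move: e2; rewrite -h subrr => /eqP; rewrite pnatr_eq0.
Qed.

Lemma max_cases (a b : algC) : Num.max a b = a \/ Num.max a b = b.
Proof. by rewrite /Num.max /Order.max; case: ifP; tauto. Qed.

Lemma bm_cases (s : seq algC) :
  \big[Num.max/0]_(z <- s) `|z| = 0 \/
  exists2 z, z \in s & \big[Num.max/0]_(z <- s) `|z| = `|z|.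
Proof.
elim: s => [|a s IH]; first by rewrite big_nil; left.
rewrite big_cons; case: (max_cases `|a| (\big[Num.max/0]_(z <- s) `|z|)) => ->.
  by right; exists a; rewrite ?mem_head.
case: IH => [->|[z zs ->]]; first by left.
by right; exists z; rewrite // inE zs orbT.
Qed.

Lemma bm_ge0 (s : seq algC) : 0 <= \big[Num.max/0]_(z <- s) `|z|.
Proof. by case: (bm_cases s) => [->|[z _ ->]]. Qed.

Lemma bm_le (s : seq algC) (D : algC) : 0 <= D -> (forall z, z \in s -> `|z| <= D) ->
  \big[Num.max/0]_(z <- s) `|z| <= D.
Proof.
move=> D0 h; case: (bm_cases s) => [->|[z zs ->]] //; exact: h.
Qed.

Lemma bm_ge (s : seq algC) z : z \in s -> `|z| <= \big[Num.max/0]_(z <- s) `|z|.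
Proof.
elim: s => [|a s IH] //; rewrite inE big_cons => /orP [/eqP ->|zs].
  have r1 : `|a| \is Num.real by apply: normr_real.
  have r2 := ger0_real (bm_ge0 s).
  by case: (real_leP r1 r2).
have r1 : `|a| \is Num.real by apply: normr_real.
have r2 := ger0_real (bm_ge0 s).
apply: (le_trans (IH zs)).
by case: (real_leP r1 r2) => // /ltW.
Qed.

Lemma exists_max (T : finType) (f : T -> algC) (i0 : T) :
  (forall i, f i \is Num.real) -> exists i, forall j, f j <= f i.
Proof.
move=> hr.
suff [i hi] : exists i, forall j, j \in enum T -> f j <= f i.
  by exists i => j; apply: hi; rewrite mem_enum.
elim: (enum T) => [|x s [i hi]]; first by exists i0.
case/orP: (real_leVge (hr x) (hr i)) => h.
  by exists i => j; rewrite inE => /orP [/eqP ->|/hi].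
exists x => j; rewrite inE => /orP [/eqP ->|/hi hj] //.
exact: le_trans hj h.
Qed.

Lemma conn_ind (T : finType) (e : rel T) (P : T -> Prop) x y :
  P x -> (forall a b, P a -> e a b -> P b) -> connect e x y -> P y.
Proof.
move=> Px step /connectP [p pth ->].
elim: p x pth Px => //= a p IH x /andP [exa pth] Px.
exact: (IH a pth (step _ _ Px exa)).
Qed.

Lemma sum_deg n (e : rel 'I_n) w (c : algC) :
  \sum_u (e w u)%:R * c = (deg e w)%:R * c.
Proof.
rewrite -mulr_suml; congr (_ * _).
have -> : \sum_u ((e w u)%:R : algC) = \sum_(u | e w u) 1.
  by rewrite [RHS]big_mkcond; apply: eq_bigr => u _; case: (e w u).
by rewrite sumr_const /deg cardsE.
Qed.

Lemma deg_le n (e : rel 'I_n) w : (deg e w <= max_degree e)%N.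
Proof. exact: (leq_bigmax w). Qed.

Lemma deg_gt0 {n} {e : rel 'I_n} {w u} : e w u -> (0 < deg e w)%N.
Proof. by move=> h; rewrite /deg card_gt0; apply/set0Pn; exists u; rewrite inE. Qed.

Lemma edge_of_deg n (e : rel 'I_n) w : (0 < deg e w)%N -> exists u, e w u.
Proof. by rewrite /deg card_gt0 => /set0Pn [u]; rewrite inE; exists u. Qed.

Lemma mem_eig n (A : 'M[algC]_n) z : (z \in eigenvalues A) = root (char_poly A) z.
Proof.
rewrite /eigenvalues; case: (closed_field_poly_normal _) => r /= Hr.
rewrite [in RHS]Hr rootZ ?root_prod_XsubC //.
by rewrite (monicP (char_poly_monic A)) oner_eq0.
Qed.

Lemma eig_of {n} {e arc : rel 'I_n} {z} : mixed_graph e arc ->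
  z \in eigenvalues (Nmx e arc) ->
  exists x : 'I_n -> algC, exists w1, x w1 != 0 /\
    forall w, \sum_u Nmx e arc w u * x u = z^* * x w.
Proof.
move=> H; rewrite mem_eig -eigenvalue_root_char => /eigenvalueP [v hv vn0].
exists (fun u => (v 0 u)^*).
have [w1 hw1|h0] := pickP (fun w => v 0 w != 0).
  exists w1; split; first by rewrite conjC_eq0.
  move=> w; have := congr1 (fun M : 'M[algC]_(1,n) => (M 0 w)^*) hv => /=.
  rewrite !mxE rmorphM /= => <-; rewrite rmorph_sum /=.
  by apply: eq_bigr => u _; rewrite rmorphM /= Nconj // mulrC.
exfalso; move/negP: vn0; apply; apply/eqP/matrixP => i j.
by rewrite ord1 mxE; move/negbFE/eqP: (h0 j).
Qed.

Lemma in_eig {n} {e arc : rel 'I_n} {x : 'I_n -> algC} {w1 b} : mixed_graph e arc ->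
  x w1 != 0 -> (forall w, \sum_u Nmx e arc w u * x u = b * x w) ->
  b^* \in eigenvalues (Nmx e arc).
Proof.
move=> H xn0 hx; rewrite mem_eig -eigenvalue_root_char; apply/eigenvalueP.
exists (\row_u (x u)^*).
  apply/matrixP => i j; rewrite ord1 !mxE.
  have := congr1 (fun c => c^*) (hx j) => /=; rewrite rmorphM /= => <-.
  rewrite rmorph_sum /=; apply: eq_bigr => u _; rewrite mxE rmorphM /= Nconj //.
  by rewrite mulrC.
apply/negP => /eqP /matrixP /(_ 0 w1); rewrite !mxE => /eqP.
by rewrite conjC_eq0; apply/negP.
Qed.

Lemma eig_main {n} {e arc : rel 'I_n} {x : 'I_n -> algC} {b : algC} {w1 : 'I_n} :
  mixed_graph e arc ->
  x w1 != 0 -> (forall w, \sum_u Nmx e arc w u * x u = b * x w) ->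
  `|b| <= (max_degree e)%:R /\
  (connected e -> `|b| = (max_degree e)%:R -> (0 < max_degree e)%N ->
   forall w, deg e w = max_degree e /\ x w != 0 /\
     forall u, e w u -> Nmx e arc w u * x u = b / (max_degree e)%:R * x w).
Proof.
move=> H xn0 hx.
set N := Nmx e arc; set D := max_degree e.
have [w0 Hw0] := @exists_max _ (fun w => `|x w|) w1 (fun w => normr_real (x w)).
rewrite /= in Hw0; set M := `|x w0| in Hw0.
have M0 : 0 < M by apply: lt_le_trans (Hw0 w1); rewrite normr_gt0.
have key w : `|x w| = M -> `|b| * M <= (deg e w)%:R * M.
  move=> hw; rewrite -hw -normrM -hx.
  apply: (le_trans (ler_norm_sum _ _ _)).
  rewrite hw -sum_deg; apply: ler_sum => u _.
  by rewrite normrM Nnorm // ler_wpM2l ?ler0n.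
have degD w : (deg e w)%:R <= D%:R :> algC by rewrite ler_nat deg_le.
have P1 : `|b| <= D%:R.
  rewrite -(ler_pM2r M0); apply: (le_trans (key w0 erefl)).
  by rewrite ler_pM2r.
split => // conn hb D0.
set mu := b / D%:R.
have DR0 : D%:R != 0 :> algC by rewrite pnatr_eq0 -lt0n.
have hmu : `|mu| = 1 by rewrite normrM normfV hb normr_nat divff.
have bmu : b = mu * D%:R by rewrite /mu divfK.
have step w : `|x w| = M -> deg e w = D /\
     forall u, e w u -> N w u * x u = mu * x w.
  move=> hw.
  have hdeg : deg e w = D.
    apply/eqP; rewrite -(eqr_nat algC) eq_le degD /=.
    by rewrite -(ler_pM2r M0) -hb key.
  split => // u.
  have c0 : (mu * x w)^* != 0.
    by rewrite conjC_eq0 -normr_eq0 normrM hmu mul1r hw gt_eqF.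
  have nc : `|mu * x w| = M by rewrite normrM hmu mul1r.
  move=> heu.
  have hU : N w u * x u * (mu * x w)^* = (e w u)%:R * M ^+ 2.
    apply: (@normC_sum_upper _ _ predT (fun u => N w u * x u * (mu * x w)^*)
                 (fun u => (e w u)%:R * M ^+ 2)) => //.
    - move=> v _; rewrite !normrM norm_conjC nc Nnorm // -mulrA expr2.
      apply: ler_wpM2l; first exact: ler0n.
      by apply: ler_wpM2r; [exact: ltW | exact: Hw0].
    - rewrite sum_deg hdeg -mulr_suml hx bmu.
      by rewrite -nc normCK; ring.
  apply: (mulIf c0); rewrite hU.
  by rewrite heu mul1r -normCK nc.
have allM w : `|x w| = M.
  apply: (@conn_ind _ _ (fun w => `|x w| = M) w0 w erefl _ (conn w0 w)).
  move=> a c ha eac; have [_ /(_ c eac) h] := step a ha.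
  have h2 : `|N a c * x c| = `|mu * x a| by rewrite h.
  by move: h2; rewrite (normrM mu) hmu normrM Nnorm // eac !mul1r ha.
move=> w; have [hd hs] := step w (allM w); split => //; split => //.
by rewrite -normr_eq0 allM gt_eqF.
Qed.

Theorem theorem3p1 (n : nat) (e arc : rel 'I_n) :
  mixed_graph e arc ->
  spectral_radius (Nmx e arc) <= (max_degree e)%:R /\
  (connected e ->
   (spectral_radius (Nmx e arc) = (max_degree e)%:R <->
    regular e (max_degree e) /\
    exists p : 'I_n -> algC,
      T6_labelling p /\ (cond_i e arc p \/ cond_ii e arc p))).
Proof.
move=> H; have H' := H; move: H' => [[esymm irr] [ae asy]].
have P1 : spectral_radius (Nmx e arc) <= (max_degree e)%:R.
  apply: bm_le; first exact: ler0n.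
  move=> z hz; have [x [w1 [xn0 hx]]] := eig_of H hz.
  by have [+ _] := eig_main H xn0 hx; rewrite norm_conjC.
split => // conn; split.
- move=> hrho.
  case: (posnP (max_degree e)) => [D0|Dpos].
    split.
      by move=> w; apply/eqP; have := @deg_le _ e w; rewrite D0 leqn0.
    exists (fun=> 1); split; first by move=> v; rewrite !inE eqxx.
    left; split.
      move=> u v _; apply/negP => /ae huv.
      by have := leq_trans (deg_gt0 huv) (@deg_le _ e u); rewrite D0.
    by move=> u v _ h; exfalso; apply: h.
  case: (bm_cases (eigenvalues (Nmx e arc))) => [h0|[z hz hzD]].
    move: hrho; rewrite /spectral_radius h0 => /eqP.
    by rewrite eq_sym pnatr_eq0 => /eqP D0; rewrite D0 in Dpos.
  have [x [w1 [xn0 hx]]] := eig_of H hz.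
  have [_ P2] := eig_main H xn0 hx.
  have hb : `|z^*| = (max_degree e)%:R.
    by rewrite norm_conjC -hzD -hrho.
  have {}P2 := P2 conn hb Dpos.
  set mu := z^* / (max_degree e)%:R in P2.
  have [u1 e1] : exists u, e w1 u by apply: edge_of_deg; rewrite (P2 w1).1.
  have mu2 : mu = 1 \/ mu = -1.
    have r1 := (P2 w1).2.2 u1 e1.
    have r2 := (P2 u1).2.2 w1 (etrans (esymm u1 w1) e1).
    rewrite -(Nconj H) in r2.
    have xu0 := (P2 u1).2.1.
    have hx1 : x u1 = mu * mu * x u1.
      transitivity ((Nmx e arc w1 u1)^* * (Nmx e arc w1 u1 * x u1)).
        by rewrite mulrA (NNc H e1) mul1r.
      by rewrite r1 mulrCA r2 mulrA.
    have : mu ^+ 2 == 1.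
      apply/eqP; apply: (mulIf xu0); by rewrite mul1r expr2 -hx1.
    by rewrite sqrf_eq1 => /orP [/eqP ->|/eqP ->]; [left|right].
  set p := fun w => x w / x w1.
  have R w u : e w u -> Nmx e arc w u * p u = mu * p w.
    by move=> h; rewrite /p mulrA ((P2 w).2.2 u h) mulrA.
  have pT w : p w \in T6.
    apply: (@conn_ind _ _ (fun w => p w \in T6) w1 w _ _ (conn w1 w)).
      by rewrite /p divff // inE eqxx.
    move=> a c ha eac.
    have -> : p c = (Nmx e arc a c)^* * (mu * p a).
      by rewrite -(R a c eac) mulrA (NNc H eac) mul1r.
    have hmp : mu * p a \in T6.
      by case: mu2 => ->; [rewrite mul1r | rewrite mulN1r; apply: T6N].
    case: (Ncases H eac) => [[-> _]|[[-> _]|[-> _]]].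
    + exact: T6omc.
    + by rewrite conjCK; apply: T6om.
    + by rewrite rmorph1 mul1r.
  have pn0 w : p w != 0 := T6_neq0 (pT w).
  split; first by move=> w; exact: (P2 w).1.
  exists p; split => //.
  case: mu2 => hm; [left | right].
  + split.
      move=> u v hp; apply/negP => auv.
      have := R u v (ae _ _ auv); rewrite hm mul1r hp NmxE auv => /eqP.
      rewrite -subr_eq0 -{2}[p v]mul1r -mulrBl mulf_eq0 subr_eq0.
      by rewrite (negbTE om_neq1) (negbTE (pn0 v)).
    move=> u v euv hne; have r := R u v euv; rewrite hm mul1r in r.
    case: (Ncases H euv) => [[hN a]|[[hN [a _]]|[hN _]]]; rewrite hN in r.
    * by left; split => //; rewrite -r mulrA omcom mul1r.
    * by right; split => //; rewrite -r.
    * by exfalso; apply: hne; rewrite -r mul1r.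
  + split.
      move=> u v hp; apply/negP => euv.
      have r := R u v euv; rewrite hm hp mulN1r in r.
      have hN : Nmx e arc u v = -1 by apply: (mulIf (pn0 v)); rewrite r mulN1r.
      case: (Ncases H euv) => [[hN' _]|[[hN' _]|[hN' _]]]; rewrite hN' in hN.
      * by move/eqP: om_neqN1.
      * by move/eqP: omc_neqN1.
      * by move/eqP: one_neqN1.
    split.
      move=> u v /and3P [euv nauv navu]; have r := R u v euv.
      by rewrite NmxE (negbTE nauv) (negbTE navu) euv mul1r hm mulN1r in r.
    move=> u v auv; have r := R u v (ae _ _ auv).
    rewrite NmxE auv hm mulN1r in r.
    by rewrite -[p v]mul1r -omcom -mulrA r mulrN mulNr.
- move=> [reg [p [pT hc]]].
  case: (posnP (max_degree e)) => [D0|Dpos].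
    by apply: le_anti; rewrite P1 /= D0; exact: bm_ge0.
  have pn0 w : p w != 0 := T6_neq0 (pT w).
  have [w1 _] : exists w1 : 'I_n, true.
    case: (pickP (@predT 'I_n)) => [w1 _|h]; first by exists w1.
    by move: Dpos; rewrite /max_degree big_pred0.
  have [mu [hmu R]] : exists mu : algC, (mu = 1 \/ mu = -1) /\
      forall w u, e w u -> Nmx e arc w u * p u = mu * p w.
    case: hc => [[c1 c2]|[c1 [c2 c3]]]; [exists 1 | exists (-1)];
      (split; first by tauto); move=> w u ewu.
    + rewrite mul1r; case: (eqVneq (p w) (p u)) => hp.
        by rewrite NmxE (negbTE (c1 _ _ hp)) (negbTE (c1 _ _ (esym hp))) ewu mul1r.
      case: (c2 w u ewu (elimN eqP hp)) => [[a h]|[a h]].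
        by rewrite NmxE a h mulrA omomc mul1r.
      by rewrite NmxE (negbTE (asy _ _ a)) a h.
    + rewrite mulN1r.
      case: (Ncases H ewu) => [[hN a]|[[hN [a na]]|[hN [na1 na2]]]]; rewrite hN.
      * by rewrite (c3 _ _ a) mulrA mulrN omomc mulN1r.
      * by rewrite (c3 _ _ a) mulNr opprK.
      * by rewrite mul1r (c2 w u) // /undirected_edge ewu na1 na2.
  have hx w : \sum_u Nmx e arc w u * p u = (mu * (max_degree e)%:R) * p w.
    transitivity (\sum_u (e w u)%:R * (mu * p w)).
      apply: eq_bigr => u _; case: (boolP (e w u)) => h.
        by rewrite R // mul1r.
      by rewrite NE0 // !mul0r.
    by rewrite sum_deg reg; ring.
  have hin := in_eig H (pn0 w1) hx.
  apply: le_anti; rewrite P1 /=.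
  rewrite /spectral_radius; apply: (le_trans _ (bm_ge _ _ hin)).
  rewrite norm_conjC normrM normr_nat.
  by case: hmu => ->; rewrite ?normrN normr1 mul1r.
Qed.
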